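(* For every $\epsilon$ with $0<\epsilon<10^{-12}$ there exists $k_0=k_0(\epsilon)$ such that for every $k\ge k_0$ the following holds: if $K>(1-\epsilon)k$ and $G$ is a two-multicoloured (red/blue) $\tfrac{27}{8}\epsilon^4k$-almost-complete graph on $K$ vertices, then $G$ contains a red connected-matching on at least $(\tfrac23-7\epsilon^{1/8})k$ vertices or a blue connected-matching on at least $(\tfrac23-7\epsilon^{1/8})k$ vertices.
   Context: A two-multicolouring assigns each edge a nonempty subset of {red, blue}; $G_{\mathrm{red}}$ ($G_{\mathrm{blue}}$) is the spanning subgraph of edges whose set contains red (blue). A graph on $N$ vertices is $a$-almost-complete if its minimum degree is at least $(N-1)-a$. A matching is a set of pairwise vertex-disjoint edges; its number of vertices is twice its number of edges. A red (blue) connected-matching is a matching in $G_{\mathrm{red}}$ ($G_{\mathrm{blue}}$) all of whose edges lie in one connected component of $G_{\mathrm{red}}$ ($G_{\mathrm{blue}}$). *)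

(* Defs.v *)
From Stdlib Require Import Reals List Arith.
Import ListNotations.
Open Scope R_scope.

(* A two-multicoloured graph on vertex set {0,...,K-1}: each pair of vertices
   carries a (possibly empty) subset of {red, blue}, described by the boolean
   relations [red] and [blue]; the pair is an edge of G iff the subset is
   nonempty (red || blue). *)
Definition two_multicoloured (K : nat) (red blue : nat -> nat -> bool) : Prop :=
  (forall i j, (i < K)%nat -> (j < K)%nat -> red i j = red j i) /\
  (forall i j, (i < K)%nat -> (j < K)%nat -> blue i j = blue j i) /\
  (forall i, (i < K)%nat -> red i i = false) /\
  (forall i, (i < K)%nat -> blue i i = false).

Definition gedge (red blue : nat -> nat -> bool) (i j : nat) : bool :=
  red i j || blue i j.

Definition degree (K : nat) (red blue : nat -> nat -> bool) (i : nat) : nat :=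
  length (filter (fun j => gedge red blue i j) (seq 0 K)).

Definition almost_complete (K : nat) (red blue : nat -> nat -> bool) (a : R) : Prop :=
  forall i, (i < K)%nat -> INR (degree K red blue i) >= (INR K - 1) - a.

Inductive connected (K : nat) (c : nat -> nat -> bool) : nat -> nat -> Prop :=
| conn_refl : forall x, (x < K)%nat -> connected K c x x
| conn_step : forall x y z, (x < K)%nat -> (y < K)%nat -> c x y = true ->
    connected K c y z -> connected K c x z.

Definition matching_vertices (M : list (nat * nat)) : list nat :=
  flat_map (fun e => [fst e; snd e]) M.

Definition is_matching (K : nat) (c : nat -> nat -> bool) (M : list (nat * nat)) : Prop :=
  (forall e, In e M -> (fst e < K)%nat /\ (snd e < K)%nat /\ c (fst e) (snd e) = true) /\
  NoDup (matching_vertices M).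

Definition connected_matching (K : nat) (c : nat -> nat -> bool) (M : list (nat * nat)) : Prop :=
  is_matching K c M /\
  (forall e1 e2, In e1 M -> In e2 M -> connected K c (fst e1) (fst e2)).

Definition mvertices (M : list (nat * nat)) : nat := (2 * length M)%nat.

(* Main.v *)
Require Import Defs.
From Stdlib Require Import Reals List Arith.
From Stdlib Require Import Lia ZArith Lra ClassicalEpsilon Classical Permutation.
Import ListNotations.
Close Scope R_scope.

Section Conn.
Variable K : nat.
Variable c : nat -> nat -> bool.
Hypothesis csym : forall i j, i < K -> j < K -> c i j = c j i.

Lemma conn_bound x y : connected K c x y -> x < K /\ y < K.
Proof. induction 1; intuition. Qed.

Lemma conn_trans x y z : connected K c x y -> connected K c y z -> connected K c x z.
Proof. induction 1; intros; auto. eapply conn_step; eauto. Qed.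

Lemma conn_sym x y : connected K c x y -> connected K c y x.
Proof.
  induction 1. constructor; auto.
  apply conn_trans with y; auto. apply conn_step with x; auto. rewrite csym; auto.
  constructor; auto.
Qed.
End Conn.

Lemma exists_notin (L X : list nat) : NoDup L -> length L > length X ->
  exists y, In y L /\ ~ In y X.
Proof.
  intros HL Hlen. apply NNPP; intro Hn.
  assert (incl L X). { intros y Hy. apply NNPP; intro; apply Hn; eauto. }
  pose proof (NoDup_incl_length HL H). lia.
Qed.

Lemma mv_length M : length (matching_vertices M) = 2 * length M.
Proof. induction M; simpl; auto. rewrite IHM. lia. Qed.

Lemma mv_app M1 M2 : matching_vertices (M1 ++ M2) = matching_vertices M1 ++ matching_vertices M2.
Proof. apply flat_map_app. Qed.

Lemma mv_cons e M : matching_vertices (e :: M) = fst e :: snd e :: matching_vertices M.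
Proof. reflexivity. Qed.

Definition matchspec (c : nat -> nat -> bool) (A U : list nat) (Q : list (nat*nat)) :=
  (forall e, In e Q -> In (fst e) U /\ c (fst e) (snd e) = true) /\
  (forall z, In z (matching_vertices Q) -> In z A \/ In z U) /\
  NoDup (matching_vertices Q).

Lemma in_mid (z y : nat) r1 r2 : In z (r1 ++ r2) -> In z (r1 ++ y :: r2).
Proof. intro H; apply in_app_or in H; apply in_or_app; simpl; tauto. Qed.
Lemma in_mid2 (y : nat) r1 r2 : In y (r1 ++ y :: r2).
Proof. apply in_or_app; simpl; tauto. Qed.

Lemma greedy_U (c : nat -> nat -> bool) (S : nat) : forall n L, length L <= n -> NoDup L ->
  (forall x, In x L -> exists Bx, length Bx <= S /\
       forall y, In y L -> y <> x -> c x y = false -> In y Bx) ->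
  exists Q, matchspec c [] L Q /\ length L <= 2 * length Q + S + 1.
Proof.
  induction n; intros L Hn HL HB.
  - exists []. split. split; [simpl; tauto| split; [simpl; tauto| constructor]]. lia.
  - destruct L as [|x rest].
    + exists []. split. split; [simpl; tauto| split; [simpl; tauto| constructor]]. simpl; lia.
    + destruct (HB x (or_introl eq_refl)) as [Bx [HBl HBx]].
      inversion HL; subst.
      destruct (le_lt_dec (length rest) S) as [Hs|Hs].
      * exists []. split. split; [simpl; tauto| split; [simpl; tauto| constructor]]. simpl; lia.
      * destruct (exists_notin rest Bx H2 ltac:(lia)) as [y [Hy Hny]].
        assert (Hxy : y <> x) by (intro; subst; contradiction).
        assert (Hc : c x y = true).
        { destruct (c x y) eqn:E; [reflexivity|exfalso; apply Hny; apply HBx; simpl; auto]. }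
        destruct (in_split _ _ Hy) as [r1 [r2 Hr]]. subst rest.
        assert (HND : NoDup (r1 ++ r2)) by (eapply NoDup_remove_1; eauto).
        assert (Hyn : ~ In y (r1 ++ r2)) by (eapply NoDup_remove_2; eauto).
        assert (Hxn : ~ In x (r1 ++ r2)).
        { intro Hin; apply H1. apply in_app_or in Hin; apply in_or_app; simpl; tauto. }
        simpl in Hn; rewrite length_app in Hn; simpl in Hn.
        destruct (IHn (r1 ++ r2)) as [Q [[HQ1 [HQ2 HQ3]] HQl]].
        { rewrite length_app; lia. }
        { auto. }
        { intros x' Hx'. destruct (HB x') as [B' [HB'l HB']].
          { right. apply in_app_or in Hx'; apply in_or_app; simpl; tauto. }
          exists B'; split; auto. intros y' Hy' Hne Hc'. apply HB'; auto.
          right. apply in_app_or in Hy'; apply in_or_app; simpl; tauto. }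
        exists ((x,y) :: Q). split; [split; [|split]|].
        -- intros e [He|He]. subst e; simpl; auto.
           destruct (HQ1 e He). split; auto. right. apply in_mid; auto.
        -- intros z Hz. rewrite mv_cons in Hz. simpl in Hz. right.
           destruct Hz as [Hz|[Hz|Hz]].
           ++ subst; simpl; auto.
           ++ subst; simpl; right; apply in_mid2.
           ++ destruct (HQ2 z Hz) as [[]|Hz2]. simpl; right; apply in_mid; auto.
        -- rewrite mv_cons. simpl. constructor.
           ++ intros [Hz|Hz]. auto. destruct (HQ2 x Hz) as [[]|]; auto.
           ++ constructor; auto. intro Hz. destruct (HQ2 y Hz) as [[]|]; auto.
        -- simpl. rewrite length_app in *. simpl. lia.
Qed.

Lemma greedy_AU (c : nat -> nat -> bool) (S T : nat) (K : nat)
  (csym : forall i j, i < K -> j < K -> c i j = c j i) :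
  forall A U, NoDup A -> NoDup U -> (forall a, In a A -> ~ In a U) ->
  (forall x, In x U -> exists Bx, length Bx <= S /\
       forall y, In y U -> y <> x -> c x y = false -> In y Bx) ->
  (forall a, In a A -> exists Ba, length Ba <= T /\
       forall u, In u U -> c u a = false -> In u Ba) ->
  length A + T < length U ->
  exists Q, matchspec c A U Q /\ length A + length U <= 2 * length Q + S + 1.
Proof.
  induction A as [|a A IH]; intros U HA HU Hdis HBU HBA Hlen.
  - destruct (greedy_U c S (length U) U (le_n _) HU HBU) as [Q [[H1 [H2 H3]] H4]].
    exists Q; split; [unfold matchspec; split; [auto| split; [intros z Hz; destruct (H2 z Hz) as [[]|]; auto | auto]] | simpl; lia].
  - destruct (HBA a (or_introl eq_refl)) as [Ba [HBal HBa]].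
    simpl in Hlen.
    destruct (exists_notin U Ba HU ltac:(lia)) as [u [Hu Hnu]].
    assert (Hc : c u a = true).
    { destruct (c u a) eqn:E; [reflexivity|exfalso; apply Hnu; apply HBa; auto]. }
    inversion HA; subst.
    destruct (in_split _ _ Hu) as [u1 [u2 Hr]]. subst U.
    assert (HND : NoDup (u1 ++ u2)) by (eapply NoDup_remove_1; eauto).
    assert (Hun : ~ In u (u1 ++ u2)) by (eapply NoDup_remove_2; eauto).
    assert (Hsub : forall z, In z (u1 ++ u2) -> In z (u1 ++ u :: u2)).
    { intros z Hz; apply in_app_or in Hz; apply in_or_app; simpl; tauto. }
    rewrite length_app in Hlen; simpl in Hlen.
    destruct (IH (u1 ++ u2)) as [Q [[HQ1 [HQ2 HQ3]] HQl]]; auto.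
    { intros a' Ha' Hin. apply (Hdis a'); simpl; auto. }
    { intros x' Hx'. destruct (HBU x') as [B' [HB'l HB']]. auto.
      exists B'; split; auto. }
    { intros a' Ha'. destruct (HBA a') as [B' [HB'l HB']]. simpl; auto.
      exists B'; split; auto. }
    { rewrite length_app; lia. }
    assert (Hau : a <> u). { intro; subst. apply (Hdis u); simpl; auto. }
    exists ((u,a) :: Q). split; [split; [|split]|].
    + intros e [He|He]. subst e; simpl; auto.
      destruct (HQ1 e He). split; auto.
    + intros z Hz. rewrite mv_cons in Hz. simpl in Hz.
      destruct Hz as [Hz|[Hz|Hz]]; subst; simpl; auto.
      destruct (HQ2 z Hz); auto.
    + rewrite mv_cons. simpl. constructor.
      * intros [Hz|Hz]. auto. destruct (HQ2 u Hz); auto.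
        apply (Hdis u); simpl; auto.
      * constructor; auto. intro Hz. destruct (HQ2 a Hz); auto.
        apply (Hdis a); simpl; auto.
    + simpl. rewrite length_app in *. simpl. lia.
Qed.

Lemma exists_max (P : nat -> Prop) (B : nat) : P 0 -> (forall n, P n -> n <= B) ->
  exists n, P n /\ forall n', P n' -> n' <= n.
Proof.
  intros H0 HB.
  assert (forall t n, P n -> (forall n', P n' -> n' <= n + t) -> exists n, P n /\ forall n', P n' -> n' <= n).
  { induction t; intros n Hn Ht.
    - exists n; split; auto. intros n' H'; specialize (Ht n' H'); lia.
    - destruct (classic (P (n + S t))) as [Hp|Hp].
      + exists (n + S t); split; auto.
      + apply (IHt n Hn). intros n' H'. specialize (Ht n' H').
        assert (n' <> n + S t) by (intro; subst; contradiction). lia. }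
  apply (H B 0 H0). intros n' H'; specialize (HB n' H'); lia.
Qed.

Lemma filter_in_len (C L : list nat) : NoDup C -> NoDup L -> incl L C ->
  length (filter (fun x => if in_dec Nat.eq_dec x L then true else false) C) = length L.
Proof.
  intros HC HL Hinc.
  assert (HF : NoDup (filter (fun x => if in_dec Nat.eq_dec x L then true else false) C))
    by (apply NoDup_filter; auto).
  apply Nat.le_antisymm; apply NoDup_incl_length; auto.
  - intros x Hx. apply filter_In in Hx. destruct Hx as [_ Hx].
    destruct (in_dec Nat.eq_dec x L); auto; discriminate.
  - intros x Hx. apply filter_In. split; auto. destruct (in_dec Nat.eq_dec x L); auto.
Qed.

Lemma in_mv e M : In e M -> In (fst e) (matching_vertices M) /\ In (snd e) (matching_vertices M).
Proof.
  induction M as [|e' M IH]; simpl; [tauto|]. intros [H|H].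
  - subst; simpl; tauto.
  - destruct (IH H); tauto.
Qed.

Lemma mv_in z M : In z (matching_vertices M) -> exists e, In e M /\ (z = fst e \/ z = snd e).
Proof.
  induction M as [|e' M IH]; simpl; [tauto|]. intros [H|[H|H]].
  - exists e'; auto.
  - exists e'; auto.
  - destruct (IH H) as [e [He1 He2]]; exists e; auto.
Qed.

Lemma nodup_choose (f : nat * nat -> nat) M : (forall e, f e = fst e \/ f e = snd e) ->
  NoDup (matching_vertices M) -> NoDup (map f M).
Proof.
  intros Hf. induction M as [|e M IH]; simpl; intros H; constructor.
  - intro Hin. apply in_map_iff in Hin. destruct Hin as [e' [He' Hin]].
    destruct (in_mv e' M Hin) as [H1 H2].
    inversion H; subst. inversion H5; subst.
    destruct (Hf e) as [E|E]; destruct (Hf e') as [E'|E']; rewrite E, E' in He'.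
    all: rewrite <- He' in *; simpl in *; tauto.
  - apply IH. inversion H; subst. inversion H3; subst. auto.
Qed.

Section MatchL.
Variables (K S : nat) (c1 c2 : nat -> nat -> bool).
Hypothesis csym1 : forall i j, i < K -> j < K -> c1 i j = c1 j i.
Hypothesis csym2 : forall i j, i < K -> j < K -> c2 i j = c2 j i.
Hypothesis Hbad : forall i, i < K -> exists Bi, length Bi <= S /\
  forall y, y < K -> c1 i y = false -> c2 i y = false -> In y Bi.
Variable C : list nat.
Hypothesis HC : NoDup C.
Hypothesis HCK : forall x, In x C -> x < K.
Hypothesis HCconn : forall x y, In x C -> In y C -> connected K c1 x y.

Definition goodM (M : list (nat*nat)) :=
  (forall e, In e M -> In (fst e) C /\ In (snd e) C /\ c1 (fst e) (snd e) = true) /\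
  NoDup (matching_vertices M).

Lemma exists_maxM : exists M, goodM M /\ forall M', goodM M' -> length M' <= length M.
Proof.
  destruct (exists_max (fun n => exists M, goodM M /\ length M = n) (length C)) as [n [[M [HM Hn]] Hmax]].
  - exists []. split; auto. split; simpl; [tauto|constructor].
  - intros n [M [[H1 H2] Hn]]. subst n.
    assert (length (matching_vertices M) <= length C).
    { apply NoDup_incl_length; auto. intros z Hz. destruct (mv_in z M Hz) as [e [He [E|E]]];
      subst; apply H1; auto. }
    rewrite mv_length in H. lia.
  - exists M; split; auto. intros M' H'. subst n. apply Hmax. eauto.
Qed.

Lemma match_lemma : exists M, (connected_matching K c1 M \/ connected_matching K c2 M) /\
  2 * length C <= 3 * mvertices M + 6 * S + 6.
Proof.
  destruct exists_maxM as [M [[HM1 HM2] Hmax]].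
  set (f0 := fun x => if in_dec Nat.eq_dec x (matching_vertices M) then true else false).
  set (U := filter (fun x => negb (f0 x)) C).
  assert (HUin : forall x, In x U <-> In x C /\ ~ In x (matching_vertices M)).
  { intro x. unfold U. rewrite filter_In. unfold f0.
    destruct (in_dec Nat.eq_dec x (matching_vertices M)); simpl; intuition discriminate. }
  assert (HUlen : length U + 2 * length M = length C).
  { pose proof (filter_length f0 C) as E. fold U in E.
    assert (E2 : length (filter f0 C) = length (matching_vertices M)).
    { apply filter_in_len; auto.
      intros z Hz. destruct (mv_in z M Hz) as [e [He [E'|E']]]; subst; apply HM1; auto. }
    rewrite mv_length in E2. lia. }
  assert (HUnd : NoDup U) by (apply NoDup_filter; auto).
  assert (HUK : forall x, In x U -> x < K) by (intros x Hx; apply HCK; apply HUin; auto).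
  assert (Hindep : forall u v, In u U -> In v U -> u <> v -> c1 u v = false).
  { intros u v Hu Hv Huv. destruct (c1 u v) eqn:E; [|reflexivity]. exfalso.
    apply HUin in Hu; apply HUin in Hv.
    assert (goodM ((u,v) :: M)).
    { split.
      - intros e [He|He]; [subst; simpl; tauto| auto].
      - rewrite mv_cons. simpl. constructor.
        + intros [H|H]; [auto|tauto].
        + constructor; tauto. }
    specialize (Hmax _ H). simpl in Hmax. lia. }
  assert (Haug : forall e u v, In e M -> In u U -> In v U -> u <> v ->
      c1 (fst e) u = true -> c1 (snd e) v = true -> False).
  { intros e u v He Hu Hv Huv Hcu Hcv.
    apply HUin in Hu; apply HUin in Hv.
    destruct (in_split _ _ He) as [M1 [M2 HMe]].
    destruct (HM1 e He) as [Hf [Hs Hc]].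
    assert (goodM ((u, fst e) :: (snd e, v) :: M1 ++ M2)).
    { split.
      - intros e' [He'|[He'|He']].
        + subst e'; simpl. split; [tauto|split; [auto|]]. rewrite csym1; auto; apply HCK; tauto.
        + subst e'; simpl. split; [auto|split; [tauto|auto]].
        + apply HM1. rewrite HMe. apply in_app_or in He'; apply in_or_app; simpl; tauto.
      - assert (HN : NoDup (u :: v :: matching_vertices M)).
        { constructor. intros [H|H]; [auto|tauto]. constructor; tauto. }
        rewrite HMe, mv_app, mv_cons in HN.
        eapply Permutation_NoDup; [|exact HN].
        rewrite !mv_cons, mv_app. simpl.
        apply perm_skip.
        apply perm_trans with (fst e :: snd e :: v :: matching_vertices M1 ++ matching_vertices M2).
        2: apply Permutation_refl.
        apply perm_trans with (v :: fst e :: snd e :: matching_vertices M1 ++ matching_vertices M2).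
        + apply perm_skip.
          apply perm_trans with (fst e :: matching_vertices M1 ++ snd e :: matching_vertices M2).
          * apply Permutation_sym. apply Permutation_middle.
          * apply perm_skip. apply Permutation_sym. apply Permutation_middle.
        + eapply perm_trans. apply perm_swap. apply perm_skip. apply perm_swap. }
    specialize (Hmax _ H). rewrite HMe in Hmax. simpl in Hmax.
    rewrite !length_app in Hmax. simpl in Hmax. lia. }
  set (good := fun x => exists w, forall u, In u U -> c1 x u = true -> u = w).
  assert (Hgood : forall e, In e M -> good (fst e) \/ good (snd e)).
  { intros e He. destruct (classic (good (fst e))) as [G|G]; [left; auto|right].
    assert (exists u1, In u1 U /\ c1 (fst e) u1 = true) as [u1 [Hu1 Hc1]].
    { apply NNPP; intro Hn; apply G; exists 0; intros u Hu Hc; exfalso; apply Hn; eauto. }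
    assert (exists u2, In u2 U /\ c1 (fst e) u2 = true /\ u2 <> u1) as [u2 [Hu2 [Hc2 Hne]]].
    { apply NNPP; intro Hn; apply G; exists u1; intros u Hu Hc; apply NNPP; intro; apply Hn; eauto. }
    exists 0. intros v Hv Hcv. exfalso.
    destruct (Nat.eq_dec v u1).
    - subst v. apply (Haug e u2 u1); auto.
    - apply (Haug e u1 v); auto. }
  set (f := fun e : nat * nat => if excluded_middle_informative (good (fst e)) then fst e else snd e).
  assert (Hf1 : forall e, f e = fst e \/ f e = snd e).
  { intro e; unfold f; destruct (excluded_middle_informative (good (fst e))); auto. }
  assert (Hf2 : forall e, In e M -> good (f e)).
  { intros e He; unfold f; destruct (excluded_middle_informative (good (fst e))); auto.
    destruct (Hgood e He); tauto. }
  set (A := map f M).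
  assert (HAnd : NoDup A) by (apply nodup_choose; auto).
  assert (HAmv : forall a, In a A -> In a (matching_vertices M)).
  { intros a Ha. apply in_map_iff in Ha. destruct Ha as [e [<- He]].
    destruct (in_mv e M He). destruct (Hf1 e) as [E|E]; rewrite E; auto. }
  assert (HAC : forall a, In a A -> In a C).
  { intros a Ha. apply HAmv in Ha. destruct (mv_in a M Ha) as [e [He [E|E]]]; subst; apply HM1; auto. }
  assert (HAgood : forall a, In a A -> good a).
  { intros a Ha. apply in_map_iff in Ha. destruct Ha as [e [<- He]]. auto. }
  assert (HAlen : length A = length M) by (apply length_map).
  assert (Hblue : connected_matching K c1 M).
  { split. split; auto.
    - intros e He. destruct (HM1 e He) as [H1 [H2 H3]]. auto.
    - intros e1 e2 He1 He2. apply HCconn; apply HM1; auto. }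
  destruct (le_lt_dec (3 * length M + S + 2) (length C)) as [Hc1|Hc1];
  [destruct (le_lt_dec (2 * S + 3) (length U)) as [Hc2|Hc2]|].
  2,3: exists M; split; [auto| unfold mvertices; lia].
  assert (HconnU : forall x y, In x U -> In y U -> connected K c2 x y).
  { intros x y Hx Hy. destruct (Nat.eq_dec x y) as [<-|Hxy]; [constructor; auto|].
    destruct (Hbad x (HUK x Hx)) as [Bx [HBxl HBx]].
    destruct (Hbad y (HUK y Hy)) as [By [HByl HBy]].
    destruct (exists_notin U (Bx ++ By ++ [x; y]) HUnd) as [z [Hz Hnz]].
    { rewrite !length_app. simpl. lia. }
    assert (z <> x) by (intro; subst; apply Hnz; rewrite !in_app_iff; simpl; tauto).
    assert (z <> y) by (intro; subst; apply Hnz; rewrite !in_app_iff; simpl; tauto).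
    assert (Hxz : c2 x z = true).
    { destruct (c2 x z) eqn:E; [reflexivity|]. exfalso. apply Hnz. apply in_or_app; left.
      apply HBx; auto. }
    assert (Hyz : c2 y z = true).
    { destruct (c2 y z) eqn:E; [reflexivity|]. exfalso. apply Hnz. rewrite !in_app_iff; right; left.
      apply HBy; auto. }
    apply conn_step with z; auto.
    apply conn_step with y; auto. rewrite csym2; auto. constructor; auto. }
  destruct (greedy_AU c2 S (S + 1) K csym2 A U HAnd HUnd) as [Q [[HQ1 [HQ2 HQ3]] HQl]].
  - intros a Ha Hu. apply HUin in Hu. apply Hu. auto.
  - intros x Hx. destruct (Hbad x (HUK x Hx)) as [Bx [HBxl HBx]]. exists Bx; split; [auto|].
    intros y Hy Hne Hc. apply HBx; auto.
  - intros a Ha. destruct (HAgood a Ha) as [w Hw].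
    assert (HaK : a < K) by auto.
    destruct (Hbad a HaK) as [Ba [HBal HBa]]. exists (Ba ++ [w]); split.
    + rewrite length_app; simpl; lia.
    + intros u Hu Hc. rewrite csym2 in Hc; auto.
      destruct (c1 a u) eqn:E.
      * rewrite (Hw u Hu E). apply in_or_app; simpl; auto.
      * apply in_or_app; left; auto.
  - lia.
  - exists Q. split.
    + right. split. split; auto.
      * intros e He. destruct (HQ1 e He) as [H1 H2].
        destruct (in_mv e Q He) as [_ Hs]. destruct (HQ2 _ Hs); repeat split; auto.
      * intros e1 e2 He1 He2. apply HconnU; apply HQ1; auto.
    + unfold mvertices. lia.
Qed.
End MatchL.

Definition reach (K : nat) (c : nat -> nat -> bool) (v : nat) :=
  filter (fun y => if excluded_middle_informative (connected K c v y) then true else false) (seq 0 K).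

Lemma reach_in K c v y : In y (reach K c v) <-> y < K /\ connected K c v y.
Proof.
  unfold reach. rewrite filter_In, in_seq.
  destruct (excluded_middle_informative (connected K c v y)); split; intros; try tauto; try lia; destruct H; auto; try discriminate.
Qed.

Lemma reach_nd K c v : NoDup (reach K c v).
Proof. apply NoDup_filter, seq_NoDup. Qed.

Section Core.
Variables (K S : nat) (c1 c2 : nat -> nat -> bool).
Hypothesis csym1 : forall i j, i < K -> j < K -> c1 i j = c1 j i.
Hypothesis csym2 : forall i j, i < K -> j < K -> c2 i j = c2 j i.
Hypothesis Hbad : forall i, i < K -> exists Bi, length Bi <= S /\
  forall y, y < K -> c1 i y = false -> c2 i y = false -> In y Bi.

Lemma apply_match (c c' : nat -> nat -> bool) :
  (forall i j, i < K -> j < K -> c i j = c j i) ->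
  (forall i j, i < K -> j < K -> c' i j = c' j i) ->
  (forall i, i < K -> exists Bi, length Bi <= S /\
    forall y, y < K -> c i y = false -> c' i y = false -> In y Bi) ->
  K <= length (reach K c 0) + 2 * S ->
  exists M, (connected_matching K c M \/ connected_matching K c' M) /\
    2 * K <= 3 * mvertices M + 10 * S + 6.
Proof.
  intros s1 s2 hb Hl.
  destruct (match_lemma K S c c' s1 s2 hb (reach K c 0) (reach_nd _ _ _)) as [M [HM Hb]].
  - intros x Hx; apply reach_in in Hx; tauto.
  - intros x y Hx Hy. apply reach_in in Hx; apply reach_in in Hy.
    apply conn_trans with 0. apply conn_sym; tauto. tauto.
  - exists M; split; auto. lia.
Qed.

Theorem core : exists M, (connected_matching K c1 M \/ connected_matching K c2 M) /\
  2 * K <= 3 * mvertices M + 10 * S + 6.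
Proof.
  destruct K as [|K'] eqn:EK.
  { exists []. split. left. split. split. simpl; tauto. constructor. simpl; tauto. simpl; lia. }
  rewrite <- EK in *.
  assert (HK : 0 < K) by lia.
  assert (Hbad' : forall i, i < K -> exists Bi, length Bi <= S /\
    forall y, y < K -> c2 i y = false -> c1 i y = false -> In y Bi).
  { intros i Hi. destruct (Hbad i Hi) as [B [H1 H2]]. exists B; split; auto. }
  set (R := reach K c2 0).
  set (Bl := reach K c1 0).
  assert (HsK : forall y, In y (seq 0 K) <-> y < K) by (intro y; rewrite in_seq; lia).
  destruct (Hbad 0 HK) as [Bv [HBvl HBv]].
  assert (Hclaim : K <= length R + 2 * S \/ K <= length Bl + 2 * S).
  { destruct (le_lt_dec K (length R + 2 * S)) as [H|H]; [left; auto|right].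
    destruct (le_lt_dec (length R) S) as [H2|H2].
    - assert (incl (seq 0 K) (Bv ++ R ++ Bl)).
      { intros y Hy. apply HsK in Hy. rewrite !in_app_iff.
        destruct (c2 0 y) eqn:E2.
        - right; left. apply reach_in. split; auto. apply conn_step with y; auto. constructor; auto.
        - destruct (c1 0 y) eqn:E1.
          + right; right. apply reach_in. split; auto. apply conn_step with y; auto. constructor; auto.
          + left; auto. }
      apply NoDup_incl_length in H0; [|apply seq_NoDup].
      rewrite length_seq, !length_app in H0. lia.
    - assert (HR : forall r, In r R -> connected K c1 0 r).
      { intros r Hr. apply reach_in in Hr. destruct Hr as [HrK Hr].
        destruct (Hbad r HrK) as [Br [HBrl HBr]].
        destruct (exists_notin (seq 0 K) (R ++ Br ++ Bv) (seq_NoDup _ _)) as [q [Hq Hnq]].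
        { rewrite length_seq, !length_app. lia. }
        apply HsK in Hq. rewrite !in_app_iff in Hnq.
        assert (HqR : ~ connected K c2 0 q) by (intro; apply Hnq; left; apply reach_in; auto).
        assert (E1 : c2 r q = false).
        { destruct (c2 r q) eqn:E; try reflexivity; exfalso; apply HqR. apply conn_trans with r; auto.
          apply conn_step with q; auto; constructor; auto. }
        assert (E2 : c2 0 q = false).
        { destruct (c2 0 q) eqn:E; try reflexivity; exfalso; apply HqR.
          apply conn_step with q; auto; constructor; auto. }
        assert (E3 : c1 r q = true).
        { destruct (c1 r q) eqn:E; try reflexivity; exfalso; apply Hnq; right; left; auto. }
        assert (E4 : c1 0 q = true).
        { destruct (c1 0 q) eqn:E; try reflexivity; exfalso; apply Hnq; right; right; auto. }
        apply conn_step with q; auto. apply conn_step with r; auto. rewrite csym1; auto.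
        constructor; auto. }
      assert (Hall : forall y, y < K -> connected K c1 0 y).
      { intros y Hy. destruct (classic (In y R)) as [Hin|Hnin]; auto.
        destruct (Hbad y Hy) as [By [HByl HBy]].
        destruct (exists_notin R By (reach_nd _ _ _)) as [r [Hr Hnr]]. lia.
        pose proof (HR r Hr).
        pose proof Hr as Hr'. apply reach_in in Hr'. destruct Hr' as [HrK Hr'].
        assert (E1 : c2 y r = false).
        { destruct (c2 y r) eqn:E; try reflexivity; exfalso; apply Hnin. apply reach_in; split; auto.
          apply conn_trans with r; auto. apply conn_step with y; auto. rewrite csym2; auto.
          constructor; auto. }
        assert (E2 : c1 y r = true).
        { destruct (c1 y r) eqn:E; try reflexivity; exfalso; apply Hnr; auto. }
        apply conn_trans with r; auto. apply conn_step with y; auto. rewrite csym1; auto.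
        constructor; auto. }
      assert (incl (seq 0 K) Bl).
      { intros y Hy. apply HsK in Hy. apply reach_in; auto. }
      apply NoDup_incl_length in H0; [|apply seq_NoDup]. rewrite length_seq in H0. lia. }
  destruct Hclaim as [Hc|Hc].
  - destruct (apply_match c2 c1 csym2 csym1 Hbad' Hc) as [M [HM Hb]].
    exists M; split; [tauto|auto].
  - apply (apply_match c1 c2 csym1 csym2 Hbad Hc).
Qed.
End Core.
Open Scope R_scope.

Lemma rpow_ge eps : 0 < eps < 1 -> eps <= Rpower eps (1/8).
Proof.
  intros [H1 H2]. unfold Rpower.
  assert (ln eps < 0). { rewrite <- ln_1. apply ln_increasing; lra. }
  rewrite <- (exp_ln eps) at 1 by lra.
  left. apply exp_increasing. lra.
Qed.

Lemma nat_ceil x : 0 <= x -> exists S : nat, x <= INR S <= x + 1.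
Proof.
  intros Hx. destruct (archimed x) as [H1 H2].
  assert (Hz : (0 <= up x)%Z). { apply le_IZR. lra. }
  exists (Z.to_nat (up x)). rewrite INR_IZR_INZ, Z2Nat.id by auto. lra.
Qed.

Theorem corollary7p16 :
  forall eps : R, 0 < eps < / 10 ^ 12 ->
  exists k0 : nat, forall k : nat, (k >= k0)%nat ->
  forall (K : nat) (red blue : nat -> nat -> bool),
    INR K > (1 - eps) * INR k ->
    two_multicoloured K red blue ->
    almost_complete K red blue ((27 / 8) * eps ^ 4 * INR k) ->
    (exists M, connected_matching K red M /\
       INR (mvertices M) >= (2 / 3 - 7 * Rpower eps (1 / 8)) * INR k) \/
    (exists M, connected_matching K blue M /\
       INR (mvertices M) >= (2 / 3 - 7 * Rpower eps (1 / 8)) * INR k).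
Proof.
  intros eps [He1 He2].
  assert (He3 : eps < 1 / 100).
  { apply Rlt_trans with (/ 10 ^ 12); auto.
    unfold Rdiv. rewrite Rmult_1_l. apply Rinv_lt_contravar; simpl; lra. }
  destruct (nat_ceil (2 / eps)) as [k0 [Hk0 _]]. { apply Rlt_le, Rdiv_lt_0_compat; lra. }
  exists k0. intros k Hk K red blue HKk [s1 [s2 [_ _]]] Hac.
  apply le_INR in Hk.
  set (d := 27 / 8 * eps ^ 4 * INR k) in *.
  assert (Hd0 : 0 <= d). { unfold d. pose proof (pos_INR k). pose proof (pow_lt eps 4 He1). nra. }
  destruct (nat_ceil (d + 1)) as [S [HS1 HS2]]. lra.
  assert (Hbad : forall i, (i < K)%nat -> exists Bi, (length Bi <= S)%nat /\
     forall y, (y < K)%nat -> red i y = false -> blue i y = false -> In y Bi).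
  { intros i Hi. exists (filter (fun j => negb (gedge red blue i j)) (seq 0 K)). split.
    - pose proof (filter_length (fun j => gedge red blue i j) (seq 0 K)) as E.
      rewrite length_seq in E. specialize (Hac i Hi). unfold degree in Hac.
      apply INR_le. apply Rle_trans with (d + 1); [|lra].
      apply (f_equal INR) in E. rewrite plus_INR in E.
      lra.
    - intros y Hy Hr Hb. apply filter_In. split. apply in_seq; lia.
      unfold gedge; rewrite Hr, Hb; reflexivity. }
  destruct (core K S red blue s1 s2 Hbad) as [M [HM Hb]].
  apply le_INR in Hb. rewrite !plus_INR, !mult_INR in Hb. simpl in Hb.
  assert (Hr := rpow_ge eps ltac:(lra)).
  assert (Hk1 : INR k * eps >= 2).
  { apply Rle_ge. apply Rle_trans with (2 / eps * eps). right; field; lra.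
    apply Rmult_le_compat_r; lra. }
  assert (Heps3 : eps ^ 3 <= 1 / 1000000).
  { assert (eps ^ 3 <= (1/100) ^ 3) by (apply pow_incr; lra). simpl in *; lra. }
  assert (Hdk : 10 * d <= eps * INR k).
  { unfold d. assert (eps ^ 4 = eps * eps ^ 3) by ring. rewrite H.
    pose proof (pos_INR k). nra. }
  assert (Hfin : INR (mvertices M) >= (2 / 3 - 7 * Rpower eps (1 / 8)) * INR k).
  { pose proof (pos_INR k). nra. }
  destruct HM; [left|right]; exists M; auto.
Qed.
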